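(* In the non-symmetric 2-colored operad $\mathbb V^{(d)}$ described below, the rewriting system $$m_{ss}(m_{ss}(x_1,x_2),x_3)\to m_{ss}(x_1,m_{ss}(x_2,x_3)),\quad m_{ts}(m_{ts}(x_1,x_2),x_3)\to m_{ts}(x_1,m_{ss}(x_2,x_3)),$$ $$m_{ts}(m_{st}(x_1,x_2),x_3)\to m_{st}(x_1,m_{ts}(x_2,x_3)),\quad m_{st}(m_{ss}(x_1,x_2),x_3)\to m_{st}(x_1,m_{st}(x_2,x_3)),$$ $$u(m_{ts}(x_1,x_2))\to m_{ss}(u(x_1),x_2),\quad u(m_{st}(x_1,x_2))\to m_{ss}(x_1,u(x_2))$$ is convergent (terminating and confluent).
   Context: Colors: straight $s$ and dotted $t$. $\mathbb V^{(d)}$ is the non-symmetric 2-colored operad generated by three binary operations of degree $0$: $m_{ss}$ (inputs $s,s$; output $s$), $m_{ts}$ (inputs $t,s$; output $t$), $m_{st}$ (inputs $s,t$; output $t$), and a unary operation $u$ of degree $d$ (input $t$; output $s$), subject to the six relations obtained by replacing each arrow above by an equality. A rewriting system for a non-symmetric operad consists of rules $\tau\to f$ ($\tau$ a planar tree monomial), reducing monomials by replacing a divisor $\tau$ with $f$; it is terminating if there is no infinite chain of reductions and confluent if every ambiguity (two leading monomials overlapping in a common vertex) yields an S-polynomial that reduces to zero. *)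

(* Defs.v *)
From Stdlib Require Import Relations.

Inductive color : Type := s | t.

(* Planar tree monomials with output color c.  A leaf [inp c] is an input of
   color c (inputs are implicitly numbered left to right: non-symmetric). *)
Inductive tree : color -> Type :=
| inp : forall c : color, tree c
| m_ss : tree s -> tree s -> tree s
| m_ts : tree t -> tree s -> tree t
| m_st : tree s -> tree t -> tree t
| u : tree t -> tree s.

(* One rewriting step: replace a divisor matching the left-hand side of a rule
   (x1, x2, x3 are arbitrary subtrees grafted at the leaves of the divisor) by
   the right-hand side, anywhere in the tree. *)
Inductive step : forall c : color, tree c -> tree c -> Prop :=
| r_ss (x1 x2 x3 : tree s) :
    step s (m_ss (m_ss x1 x2) x3) (m_ss x1 (m_ss x2 x3))
| r_ts (x1 : tree t) (x2 x3 : tree s) :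
    step t (m_ts (m_ts x1 x2) x3) (m_ts x1 (m_ss x2 x3))
| r_tst (x1 : tree s) (x2 : tree t) (x3 : tree s) :
    step t (m_ts (m_st x1 x2) x3) (m_st x1 (m_ts x2 x3))
| r_st (x1 x2 : tree s) (x3 : tree t) :
    step t (m_st (m_ss x1 x2) x3) (m_st x1 (m_st x2 x3))
| r_uts (x1 : tree t) (x2 : tree s) :
    step s (u (m_ts x1 x2)) (m_ss (u x1) x2)
| r_ust (x1 : tree s) (x2 : tree t) :
    step s (u (m_st x1 x2)) (m_ss x1 (u x2))
| c_ss_l (a a' b : tree s) : step s a a' -> step s (m_ss a b) (m_ss a' b)
| c_ss_r (a b b' : tree s) : step s b b' -> step s (m_ss a b) (m_ss a b')
| c_ts_l (a a' : tree t) (b : tree s) : step t a a' -> step t (m_ts a b) (m_ts a' b)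
| c_ts_r (a : tree t) (b b' : tree s) : step s b b' -> step t (m_ts a b) (m_ts a b')
| c_st_l (a a' : tree s) (b : tree t) : step s a a' -> step t (m_st a b) (m_st a' b)
| c_st_r (a : tree s) (b b' : tree t) : step t b b' -> step t (m_st a b) (m_st a b')
| c_u (a a' : tree t) : step t a a' -> step s (u a) (u a').

Definition terminating : Prop :=
  forall (c : color) (f : nat -> tree c), ~ (forall n, step c (f n) (f (S n))).

Definition confluent : Prop :=
  forall (c : color) (x y z : tree c),
    clos_refl_trans (tree c) (step c) x y ->
    clos_refl_trans (tree c) (step c) x z ->
    exists w, clos_refl_trans (tree c) (step c) y w /\
              clos_refl_trans (tree c) (step c) z w.

Definition convergent : Prop := terminating /\ confluent.

(* Main.v *)
Require Import Defs.
From Stdlib Require Import Relations List Lia Classical.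
Import ListNotations.

Fixpoint w {c} (x : tree c) : nat :=
  match x with
  | inp _ => 1
  | m_ss a b => 2 * w a + w b
  | m_ts a b => 2 * w a + w b
  | m_st a b => 2 * w a + w b
  | u a => 3 * w a
  end.

Lemma w_pos : forall c (x : tree c), 1 <= w x.
Proof. induction x; simpl; lia. Qed.

Lemma step_w : forall c x y, step c x y -> w y < w x.
Proof.
  induction 1; simpl in *;
  repeat match goal with |- context [@w ?c ?x] => 
    lazymatch goal with H : 1 <= @w c x |- _ => fail | _ => pose proof (w_pos c x) end end;
  lia.
Qed.

Definition semT (c : color) : Type :=
  match c with s => list bool | t => (list bool * list bool)%type end.

Fixpoint sem {c} (x : tree c) : semT c :=
  match x in tree c return semT c with
  | inp s => [false]
  | inp t => ([], [])
  | m_ss a b => sem a ++ sem b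
  | m_ts a b => (fst (sem a), snd (sem a) ++ sem b)
  | m_st a b => (sem a ++ fst (sem b), snd (sem b))
  | u a => fst (sem a) ++ true :: snd (sem a)
  end.

Lemma step_sem : forall c x y, step c x y -> sem x = sem y.
Proof.
  induction 1; simpl; try rewrite IHstep; repeat rewrite <- app_assoc; auto.
Qed.

Lemma rt_sem : forall c x y, clos_refl_trans (tree c) (step c) x y -> sem x = sem y.
Proof.
  induction 1; auto. apply step_sem; auto. congruence.
Qed.

Lemma sem_s_ne : forall (x : tree s), sem x <> [].
Proof.
  assert (forall c (x : tree c), match c return tree c -> Prop with
     s => fun x => sem x <> [] | t => fun _ => True end x).
  { induction x; simpl; auto.
    - destruct c; simpl; auto; discriminate.
    - destruct (sem x1); simpl; auto; discriminate.
    - destruct (fst (sem x)); simpl; discriminate. }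
  intro x; apply (H s x).
Qed.

Definition letter (b : bool) : tree s := if b then u (inp t) else inp s.

Fixpoint reify_s (l : list bool) : tree s :=
  match l with
  | [] => inp s
  | b :: l' => match l' with [] => letter b | _ => m_ss (letter b) (reify_s l') end
  end.

Fixpoint reify_t (l r : list bool) : tree t :=
  match l with
  | [] => match r with [] => inp t | _ => m_ts (inp t) (reify_s r) end
  | b :: l' => m_st (letter b) (reify_t l' r)
  end.

Definition reify (c : color) : semT c -> tree c :=
  match c return semT c -> tree c with
  | s => reify_s
  | t => fun p => reify_t (fst p) (snd p)
  end.

Definition irred c (x : tree c) := forall y, ~ step c x y.

Lemma reify_cons : forall b l, l <> [] -> reify_s (b :: l) = m_ss (letter b) (reify_s l).
Proof. intros b [|c l] H; [congruence|reflexivity]. Qed.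

Lemma irred_reify : forall c (x : tree c), irred c x -> x = reify c (sem x).
Proof.
  induction x; intro Hi.
  - destruct c; reflexivity.
  - assert (Ha : x1 = reify_s (sem x1)) by (apply IHx1; intros y Hy; apply (Hi _ (c_ss_l _ _ _ Hy))).
    assert (Hb : x2 = reify_s (sem x2)) by (apply IHx2; intros y Hy; apply (Hi _ (c_ss_r _ _ _ Hy))).
    simpl. pose proof (sem_s_ne x1) as N1. pose proof (sem_s_ne x2) as N2.
    destruct (sem x1) as [|b [|c l]] eqn:E; [congruence| |].
    + simpl in Ha. change (m_ss x1 x2 = reify_s (b :: sem x2)). rewrite (reify_cons b (sem x2) N2). congruence.
    + exfalso. simpl in Ha. rewrite Ha in Hi. eapply Hi. apply r_ss.
  - assert (Ha : x1 = reify_t (fst (sem x1)) (snd (sem x1))) by (apply IHx1; intros y Hy; apply (Hi _ (c_ts_l _ _ _ Hy))).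
    assert (Hb : x2 = reify_s (sem x2)) by (apply IHx2; intros y Hy; apply (Hi _ (c_ts_r _ _ _ Hy))).
    simpl. pose proof (sem_s_ne x2) as N2.
    destruct (fst (sem x1)) as [|b l]; destruct (snd (sem x1)) as [|c r]; simpl in Ha.
    + simpl. destruct (sem x2); [congruence|]. congruence.
    + exfalso; rewrite Ha in Hi; eapply Hi; apply r_ts.
    + exfalso; rewrite Ha in Hi; eapply Hi; apply r_tst.
    + exfalso; rewrite Ha in Hi; eapply Hi; apply r_tst.
  - assert (Ha : x1 = reify_s (sem x1)) by (apply IHx1; intros y Hy; apply (Hi _ (c_st_l _ _ _ Hy))).
    assert (Hb : x2 = reify_t (fst (sem x2)) (snd (sem x2))) by (apply IHx2; intros y Hy; apply (Hi _ (c_st_r _ _ _ Hy))).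
    simpl. pose proof (sem_s_ne x1) as N1.
    destruct (sem x1) as [|b [|c l]] eqn:E; [congruence| |].
    + simpl in Ha. simpl. congruence.
    + exfalso. simpl in Ha. rewrite Ha in Hi. eapply Hi. apply r_st.
  - assert (Ha : x = reify_t (fst (sem x)) (snd (sem x))) by (apply IHx; intros y Hy; apply (Hi _ (c_u _ _ Hy))).
    simpl.
    destruct (fst (sem x)) as [|b l]; destruct (snd (sem x)) as [|c r]; simpl in Ha.
    + simpl. congruence.
    + exfalso; rewrite Ha in Hi; eapply Hi; apply r_uts.
    + exfalso; rewrite Ha in Hi; eapply Hi; apply r_ust.
    + exfalso; rewrite Ha in Hi; eapply Hi; apply r_ust.
Qed.

Lemma normalize : forall c n (x : tree c), w x < n ->
  exists y, clos_refl_trans (tree c) (step c) x y /\ irred c y.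
Proof.
  intros c n; induction n; intros x Hx; [lia|].
  destruct (classic (exists y, step c x y)) as [[y Hy]|Hn].
  - destruct (IHn y) as [z [Hz Iz]]. pose proof (step_w _ _ _ Hy); lia.
    exists z; split; auto. eapply rt_trans; [apply rt_step; eauto|]; auto.
  - exists x; split; [apply rt_refl|]. intros y Hy; apply Hn; eauto.
Qed.

Theorem theorem4p11 : convergent.
Proof.
  split.
  - intros c f Hf.
    assert (forall n, w (f n) + n <= w (f 0)).
    { induction n; [lia|]. pose proof (step_w _ _ _ (Hf n)); lia. }
    specialize (H (S (w (f 0)))). lia.
  - intros c x y z Hy Hz.
    destruct (normalize c (S (w y)) y ltac:(lia)) as [y' [Hy' Iy]].
    destruct (normalize c (S (w z)) z ltac:(lia)) as [z' [Hz' Iz]].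
    exists y'. split; auto.
    replace y' with z'; auto.
    rewrite (irred_reify _ _ Iy), (irred_reify _ _ Iz).
    f_equal. apply rt_sem in Hy, Hz, Hy', Hz'. congruence.
Qed.
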